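(* Let $P$ be a poset with least element and $f:P\times P\to P$ monotone. Let $m,n\ge0$ be such that for every $x\in P$, $\mu_y.f(x,y)=f_x^m(\bot)$ where $f_x=f(x,-)$, and such that $h(x)=\mu_y.f(x,y)$ satisfies $\mu.h=h^n(\bot)$. Then the map $d(x)=f(x,x)$ has a least fixed point and $\mu_x.f(x,x)=d^{nm}(\bot)$.
   Context: $\mu$ denotes least fixed point; exponents denote iterated composition. *)

(* Defs.v *)
From HB Require Import structures.
From mathcomp Require Import all_boot all_order.
Set Implicit Arguments. Unset Strict Implicit. Unset Printing Implicit Defensive.
Import Order.TTheory.

Definition is_lfp (disp : Order.disp_t) (T : porderType disp) (g : T -> T) (a : T) : Prop :=
  g a = a /\ forall b : T, g b = b -> (a <= b)%O.

(* Main.v *)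
Require Import Defs.
From HB Require Import structures.
From mathcomp Require Import all_boot all_order.
Import Order.TTheory.

Theorem mainTheorem15 (disp : Order.disp_t) (T : bPOrderType disp)
    (f : T -> T -> T) (m n : nat)
    (f_mono : forall x x' y y' : T, (x <= x')%O -> (y <= y')%O -> (f x y <= f x' y')%O)
    (hf : forall x : T, is_lfp (f x) (iter m (f x) \bot%O))
    (hh : is_lfp (fun x : T => iter m (f x) \bot%O)
                 (iter n (fun x : T => iter m (f x) \bot%O) \bot%O)) :
  is_lfp (fun x : T => f x x) (iter (n * m)%N (fun x : T => f x x) \bot%O).
Proof.
set d := fun x : T => f x x.
set h := fun x : T => iter m (f x) \bot%O.
set a := iter n h \bot%O.
have d_mono : forall x y : T, (x <= y)%O -> (d x <= d y)%O.
  by move=> x y xy; apply: f_mono.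
have h_monoj : forall j (x y : T), (x <= y)%O ->
    (iter j (f x) \bot%O <= iter j (f y) \bot%O)%O.
  move=> j x y xy; elim: j => [|j IH] //=; exact: f_mono.
have h_mono : forall x y : T, (x <= y)%O -> (h x <= h y)%O by move=> x y; apply: h_monoj.
have chain : forall i, (iter i d \bot%O <= iter i.+1 d \bot%O)%O.
  elim=> [|i IH] /=; [exact: le0x| exact: d_mono].
have chain_le : forall i j, (i <= j)%N -> (iter i d \bot%O <= iter j d \bot%O)%O.
  move=> i j; elim: j => [|j IH].
    by rewrite leqn0 => /eqP ->.
  rewrite leq_eqVlt => /orP [/eqP -> //|]; rewrite ltnS => /IH H.
  exact: le_trans H (chain j).
have fixd : d a = a.
  have [ha _] := hh. have [hfa _] := hf a.
  have e : iter m (f a) \bot%O = a := ha.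
  by rewrite e in hfa.
have belowa : forall j, (iter j d \bot%O <= a)%O.
  elim=> [|j IH] /=; first exact: le0x.
  by rewrite -fixd; apply: d_mono.
have fz : forall z : T, (forall i, (z <= iter i d z)%O) ->
    forall j, (iter j (f z) z <= iter j d z)%O.
  move=> z Hz; elim=> [|j IH] //=; exact: f_mono.
have upper : forall k, (iter k h \bot%O <= iter (k * m) d \bot%O)%O.
  elim=> [|k IH] /=; first exact: le0x.
  set z := iter (k * m) d \bot%O.
  have Hz : forall i, (z <= iter i d z)%O.
    by move=> i; rewrite /z -iterD; apply: chain_le; rewrite leq_addl.
  apply: le_trans (h_mono _ _ IH) _.
  rewrite /h -/z mulSn iterD.
  apply: le_trans (fz z Hz m).
  have gen : forall j, (iter j (f z) \bot%O <= iter j (f z) z)%O.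
    elim=> [|j IH2] /=; [exact: le0x| exact: f_mono].
  exact: gen.
have eqa : iter (n * m) d \bot%O = a.
  apply/eqP; rewrite eq_le belowa /=; exact: upper.
rewrite -/d eqa; split => // b db.
have hb : (h b <= b)%O.
  have [_ Hl] := hf b. exact: Hl.
have : forall k, (iter k h \bot%O <= b)%O.
  elim=> [|k IH] /=; first exact: le0x.
  exact: le_trans (h_mono _ _ IH) hb.
by move/(_ n).
Qed.
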